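(* Let $G$ be the graph associated with a succinct representation $\mathcal{G}=(H,\{(\ell_i,S_i)\mid 1\le i\le r\})$. Then $\mathcal{I}(G)\ge \sum_{i=1}^r\gamma(\ell_i)$, where $\gamma(\ell)=\ell^2/2$ if $\ell$ is even and $\gamma(\ell)=(\ell^2-1)/2$ if $\ell$ is odd.
   Context: All graphs are finite, simple and undirected. For an ordering $\sigma$ of $V(G)$ and $v\in V(G)$, $N_L(v,\sigma)$ and $N_R(v,\sigma)$ are the sets of neighbours of $v$ preceding and following $v$; $\mathcal{I}(v,\sigma)=\big||N_L(v,\sigma)|-|N_R(v,\sigma)|\big|$, $\mathcal{I}(\sigma)=\sum_v\mathcal{I}(v,\sigma)$, and $\mathcal{I}(G)=\min_\sigma\mathcal{I}(\sigma)$. A succinct representation is a tuple $(H,\{(\ell_i,S_i)\mid 1\le i\le r\})$ where $H$ is a graph, each $\ell_i$ is a positive integer and $S_i\subseteq V(H)$; its associated graph $G$ has vertex set $V(H)\cup C_1\cup\dots\cup C_r$ (pairwise disjoint, $|C_i|=\ell_i$), with edges: those of $H$ on $V(H)$, all edges within each $C_i$, no edges between distinct $C_i$'s, and $v\in V(H)$ adjacent to every vertex of $C_i$ iff $v\in S_i$ (and to none otherwise). *)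

(* Defs.v *)
From mathcomp Require Import all_boot all_fingroup.
Set Implicit Arguments. Unset Strict Implicit. Unset Printing Implicit Defensive.

(* An ordering of V is represented by a permutation s of V: vertex v is at
   position enum_rank (s v) (every linear order of V arises this way). *)
Section Imbalance.
Variables (V : finType) (e : rel V).

Definition pos (s : {perm V}) (v : V) : nat := enum_rank (s v).

Definition NL (s : {perm V}) (v : V) : {set V} :=
  [set u | e v u & pos s u < pos s v].
Definition NR (s : {perm V}) (v : V) : {set V} :=
  [set u | e v u & pos s v < pos s u].

Definition absdiff (a b : nat) : nat := (a - b) + (b - a).

Definition vimb (s : {perm V}) (v : V) : nat := absdiff #|NL s v| #|NR s v|.
Definition ord_imbalance (s : {perm V}) : nat := \sum_(v : V) vimb s v.

Definition graph_imbalance : nat :=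
  \big[minn/ord_imbalance 1%g]_(s : {perm V}) ord_imbalance s.
End Imbalance.

(* The graph associated with a succinct representation (H, {(ell_i, S_i)}):
   vertices V(H) + disjoint cliques C_i = {i} x 'I_(ell i). *)
Section Succinct.
Variables (VH : finType) (eH : rel VH) (r : nat) (ell : 'I_r -> nat)
          (S : 'I_r -> {set VH}).

Definition succ_vertex : finType := (VH + {i : 'I_r & 'I_(ell i)})%type.

Definition succ_edge : rel succ_vertex := fun x y =>
  match x, y with
  | inl a, inl b => eH a b
  | inr c, inr d => (tag c == tag d) && (c != d)
  | inl a, inr d => a \in S (tag d)
  | inr c, inl b => b \in S (tag c)
  end.
End Succinct.

Definition gamma (l : nat) : nat :=
  if odd l then (l ^ 2 - 1) %/ 2 else l ^ 2 %/ 2.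

(* Main.v *)
Require Import Defs.
From mathcomp Require Import all_boot all_fingroup.
From mathcomp Require Import all_order all_algebra zify.
Import Order.TTheory GRing.Theory Num.Theory.
Set Implicit Arguments. Unset Strict Implicit. Unset Printing Implicit Defensive.
Lemma gammaSS m : gamma m.+2 = gamma m + 2 * m.+1.
Proof.
rewrite /gamma /= negbK.
have -> : m.+2 ^ 2 = m ^ 2 + 4 * m.+1 by rewrite !expnS expn0; lia.
case: ifP => hm.
  have : 0 < m ^ 2 by rewrite expn_gt0; case: m hm.
  set q := m ^ 2; lia.
set q := m ^ 2; lia.
Qed.

Lemma absdiffE a b : absdiff a b = absz (Posz a - Posz b).
Proof. rewrite /absdiff; lia. Qed.

Section Abs.
Variables (T : finType) (p : T -> nat) (p_inj : injective p) (d : T -> int).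
Definition cntL (A : {set T}) u v := #|[set w in A | p u <= p w < p v]|.
Definition cntR (A : {set T}) u v := #|[set w in A | p u < p w <= p v]|.
Definition good (A : {set T}) := forall u v, u \in A -> v \in A -> p u < p v ->
  (Posz (cntL A u v + cntR A u v) <= d v - d u)%R.

Lemma good_sub (A B : {set T}) : A \subset B -> good B -> good A.
Proof.
move=> sAB gB u v uA vA puv; apply: le_trans (gB u v _ _ puv);
  [| exact: (subsetP sAB) | exact: (subsetP sAB)].
rewrite lez_nat leq_add // subset_leq_card //; apply/subsetP=> w;
  rewrite !inE => /andP[wA ->]; by rewrite (subsetP sAB).
Qed.

Lemma key n : forall A : {set T}, #|A| <= n -> good A -> gamma #|A| <= \sum_(v in A) absz (d v).
Proof.
elim: n => [|n IH] A hA gA.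
  by move: hA; rewrite leqn0 => /eqP ->.
have [h1|h2] := leqP #|A| 1.
  by have -> : gamma #|A| = 0 by case: #|A| h1 => [|[|]].
have [a aA] : {a | a \in A}.
  by case: (pickP (mem A)) => [a|/eq_card0 h]; [exists a | rewrite h in h2].
case: (arg_minnP p aA) => umin uminA' hmin.
have uminA : umin \in A by exact: uminA'.
case: (arg_maxnP p aA) => umax umaxA' hmax'.
have umaxA : umax \in A by exact: umaxA'.
have hmax : forall j, j \in A -> p j <= p umax by exact: hmax'.
have hne : umin != umax.
  apply/negP => /eqP e; move: h2; rewrite ltnNge => /negP; apply.
  apply/card_le1_eqP => x y xA yA.
  have ex : x = umin by apply: p_inj; apply/eqP; rewrite eqn_leq hmin // andbT e; exact: hmax.
  have ey : y = umin by apply: p_inj; apply/eqP; rewrite eqn_leq hmin // andbT e; exact: hmax.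
  by rewrite ex ey.
have plt : p umin < p umax.
  rewrite ltn_neqAle hmax // andbT; apply: contra hne => /eqP e.
  by apply/eqP; apply: p_inj.
set A' := A :\ umin :\ umax.
have cA : #|A| = #|A'|.+2.
  have := cardsD1 umin A; have := cardsD1 umax (A :\ umin).
  rewrite !inE uminA umaxA eq_sym hne /= /A'; lia.
rewrite (bigD1 umin) //= (bigD1 umax) /=; last by rewrite umaxA eq_sym hne.
rewrite (eq_bigl (fun v => v \in A')); last first.
  move=> v; rewrite /A' !inE; by case: (v \in A); case: (v == umin); case: (v == umax).
have IH' := IH A'.
have hA' : #|A'| <= n by move: hA; rewrite cA; lia.
have gA' : good A' by apply: good_sub gA; rewrite /A'; apply: subset_trans (subsetDl _ _) (subsetDl _ _).
have := IH' hA' gA'.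
have := gA umin umax uminA umaxA plt.
have -> : cntL A umin umax = #|A'|.+1.
  rewrite /cntL (_ : [set w in A | _] = A :\ umax); last first.
    apply/setP=> w; rewrite !inE; case wA: (w \in A); rewrite ?andbF //= hmin //=.
    by rewrite andbT ltn_neqAle hmax // andbT (inj_eq p_inj).
  have := cardsD1 umax A; rewrite umaxA; lia.
have -> : cntR A umin umax = #|A'|.+1.
  rewrite /cntR (_ : [set w in A | _] = A :\ umin); last first.
    apply/setP=> w; rewrite !inE; case wA: (w \in A); rewrite ?andbF //= hmax //=.
    by rewrite andbT ltn_neqAle hmin // andbT (inj_eq p_inj) andbT eq_sym.
  have := cardsD1 umin A; rewrite uminA; lia.
rewrite cA gammaSS.
set S := \sum_(v in A') _; move: (d umin) (d umax) => x y; lia.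
Qed.
End Abs.

Section Graph.
Variables (VH : finType) (eH : rel VH) (r : nat) (ell : 'I_r -> nat) (S : 'I_r -> {set VH}).
Let V := succ_vertex VH ell.
Let e := @succ_edge VH eH r ell S.
Variables (s : {perm V}) (i : 'I_r).
Definition xv (j : 'I_(ell i)) : V := inr (Tagged (fun i => 'I_(ell i)) j).

Lemma xv_inj : injective xv.
Proof. move=> j1 j2 [] h; exact: eq_from_Tagged h. Qed.

Lemma same_nb j1 j2 y : y != xv j1 -> y != xv j2 -> e (xv j1) y = e (xv j2) y.
Proof.
case: y => [b|c] //= h1 h2.
have n1 : Tagged (fun i => 'I_(ell i)) j1 != c by apply: contra h1 => /eqP <-.
have n2 : Tagged (fun i => 'I_(ell i)) j2 != c by apply: contra h2 => /eqP <-.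
by rewrite n1 n2.
Qed.

Lemma e_xx j w : e (xv j) (xv w) = (j != w).
Proof. by rewrite /e /= eqxx /= (inj_eq (@eq_from_Tagged _ _ i)). Qed.

Definition pp (j : 'I_(ell i)) := pos s (xv j).
Lemma pp_inj : injective pp.
Proof. move=> j1 j2 h; apply: xv_inj; apply: (@perm_inj _ s); apply: enum_rank_inj; exact: val_inj h. Qed.

Definition dd (j : 'I_(ell i)) : int := Posz #|NL e s (xv j)| - Posz #|NR e s (xv j)|.

Lemma good_T : good pp dd setT.
Proof.
move=> u v _ _ puv.
set BL := xv @: [set w in [set: 'I_(ell i)] | pp u <= pp w < pp v].
set BR := xv @: [set w in [set: 'I_(ell i)] | pp u < pp w <= pp v].
have cL : #|BL| = cntL pp setT u v by rewrite card_imset //; exact: xv_inj.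
have cR : #|BR| = cntR pp setT u v by rewrite card_imset //; exact: xv_inj.
have hL : #|NL e s (xv u)| + #|BL| <= #|NL e s (xv v)|.
  rewrite -cardsUI.
  have -> : NL e s (xv u) :&: BL = set0.
    apply/setP => y; rewrite !inE; apply/negP => /andP[/andP[_ py] /imsetP[w]].
    rewrite !inE => hw ey; move: py hw; rewrite ey /pp => h1 /andP[]; by rewrite leqNgt h1.
  rewrite cards0 addn0; apply: subset_leq_card; apply/subsetP => y.
  rewrite inE => /orP[|/imsetP[w]].
    rewrite /NL !inE => /andP[hy py].
    have n1 : y != xv u by apply: contraTneq py => ->; rewrite ltnn.
    have n2 : y != xv v by apply: contraTneq py => ->; rewrite -leqNgt ltnW.
    by rewrite -(same_nb n1 n2) hy /= (ltn_trans py).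
  rewrite !inE => /andP[_ /andP[h1 h2]] ->.
  apply/andP; split; last exact: h2.
  rewrite e_xx; apply: contraTneq h2 => ->; by rewrite ltnn.
have hR : #|NR e s (xv v)| + #|BR| <= #|NR e s (xv u)|.
  rewrite -cardsUI.
  have -> : NR e s (xv v) :&: BR = set0.
    apply/setP => y; rewrite !inE; apply/negP => /andP[/andP[_ py] /imsetP[w]].
    rewrite !inE /= => hw ey; move: py hw; rewrite ey /pp => h1 /andP[_]; by rewrite leqNgt h1.
  rewrite cards0 addn0; apply: subset_leq_card; apply/subsetP => y.
  rewrite inE => /orP[|/imsetP[w]].
    rewrite /NR !inE => /andP[hy py].
    have n1 : y != xv u by apply: contraTneq py => ->; rewrite -leqNgt ltnW.
    have n2 : y != xv v by apply: contraTneq py => ->; rewrite ltnn.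
    by rewrite (same_nb n1 n2) hy /= (ltn_trans puv).
  rewrite !inE => /andP[_ /andP[h1 h2]] ->.
  apply/andP; split; last exact: h1.
  rewrite e_xx; apply: contraTneq h1 => ->; by rewrite ltnn.
rewrite /dd; move: hL hR; rewrite cL cR; lia.
Qed.

Lemma clique_bound : gamma (ell i) <= \sum_(j : 'I_(ell i)) vimb e s (xv j).
Proof.
have := key pp_inj (leqnn #|[set: 'I_(ell i)]|) good_T.
rewrite cardsT card_ord => h; apply: leq_trans h _.
rewrite (eq_bigl predT) => [|j]; last by rewrite in_setT.
apply: leq_sum => j _; rewrite /vimb absdiffE /dd //.
Qed.
End Graph.

Theorem proposition1 (VH : finType) (eH : rel VH)
  (eH_sym : symmetric eH) (eH_irr : irreflexive eH)
  (r : nat) (ell : 'I_r -> nat) (ell_pos : forall i, 0 < ell i)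
  (S : 'I_r -> {set VH}) :
  \sum_(i < r) gamma (ell i) <= graph_imbalance (@succ_edge VH eH r ell S).
Proof.
have H : forall s, \sum_(i < r) gamma (ell i) <= ord_imbalance (@succ_edge VH eH r ell S) s.
  move=> s; rewrite /ord_imbalance big_sumType /=.
  apply: leq_trans (leq_addl _ _).
  pose F := fun c => vimb (@succ_edge VH eH r ell S) s (inr c).
  have E : \sum_(i < r) \sum_(j : 'I_(ell i)) F (Tagged (fun i => 'I_(ell i)) j) = \sum_c F c.
    rewrite (sig_big_dep xpredT (fun i => xpredT) (fun i j => F (Tagged (fun i => 'I_(ell i)) j))) /=.
    by apply: eq_bigr => p _; rewrite taggedK.
  rewrite -E.
  apply: leq_sum => i _; exact: clique_bound.
rewrite /graph_imbalance; apply: (big_ind (fun m => _ <= m)) => //.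
by move=> a b ha hb; rewrite leq_min ha hb.
Qed.
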